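(* Let $P$ be a reduced punctured Preparata code of length $n$, and let $r,s\in\{1,\ldots,n\}$ with $r\neq s$. Then there exists exactly one coordinate $t\in\{1,\ldots,n\}$ such that every codeword of $P$ of weight $5$ having ones in coordinates $r$ and $s$ has a zero in coordinate $t$.
   Context: $E^n$ is the set of binary vectors of length $n$ with the Hamming distance $d$; the weight of $x$ is its distance to $0^n$ and $\mathrm{supp}(x)=\{i: x_i=1\}$. A code is a subset of $E^n$; it is reduced if it contains the all-zero vector $0^n$. A Preparata code is a binary code of length $2^m$ ($m\ge 4$ even) with minimum distance $6$ and maximum possible cardinality among binary codes of that length and minimum distance (cardinality $2^{2^m}/2^{2m}$). A punctured Preparata code is obtained from a Preparata code by deleting one coordinate; it has length $n=2^m-1$ and minimum distance $5$. For a reduced punctured Preparata code, the supports of its codewords of weight $5$ form a $2$-$(n,5,(n-3)/3)$ design (every $2$-subset of coordinates lies in exactly $(n-3)/3$ of these supports). *)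

(* Defs.v *)
From mathcomp Require Import all_boot.
Set Implicit Arguments. Unset Strict Implicit. Unset Printing Implicit Defensive.

Definition bvec (n : nat) := {ffun 'I_n -> bool}.

Definition zerov (n : nat) : bvec n := [ffun => false].

Definition hdist (n : nat) (x y : bvec n) : nat := #|[set i | x i != y i]|.

Definition wt (n : nat) (x : bvec n) : nat := hdist x (zerov n).

Definition supp (n : nat) (x : bvec n) : {set 'I_n} := [set i | x i].

Definition reduced (n : nat) (C : {set bvec n}) : Prop := zerov n \in C.

Definition min_dist (n : nat) (C : {set bvec n}) (d : nat) : Prop :=
  (forall x y, x \in C -> y \in C -> x != y -> d <= hdist x y) /\
  (exists x y, [/\ x \in C, y \in C, x != y & hdist x y = d]).

Definition preparata (N : nat) (C : {set bvec N}) : Prop :=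
  exists m : nat, [/\ ~~ odd m, 4 <= m, N = 2 ^ m,
    min_dist C 6 & #|C| = 2 ^ (2 ^ m) %/ 2 ^ (2 * m)].

Definition puncture (n : nat) (j : 'I_n.+1) (x : bvec n.+1) : bvec n :=
  [ffun i : 'I_n => x (lift j i)].

Definition punctured_preparata (n : nat) (P : {set bvec n}) : Prop :=
  exists (C : {set bvec n.+1}) (j : 'I_n.+1),
    preparata C /\ P = [set puncture j x | x in C].

(* Main.v *)
Require Import Defs.
From mathcomp Require Import all_boot.
From mathcomp Require Import zify.
Set Implicit Arguments. Unset Strict Implicit. Unset Printing Implicit Defensive.

Definition sd (T : finType) (A B : {set T}) : {set T} := (A :\: B) :|: (B :\: A).

Lemma in_sd (T : finType) (A B : {set T}) i : (i \in sd A B) = (i \in A) (+) (i \in B).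
Proof. by rewrite !inE; case: (i \in A); case: (i \in B). Qed.

Lemma sdC (T : finType) (A B : {set T}) : sd A B = sd B A.
Proof. by apply/setP=> i; rewrite !in_sd addbC. Qed.

Lemma sdK (T : finType) (A C : {set T}) : sd (sd A C) C = A.
Proof. by apply/setP=> i; rewrite !in_sd -addbA addbb addbF. Qed.

Lemma sd0 (T : finType) (A : {set T}) : sd A set0 = A.
Proof. by apply/setP=> i; rewrite !in_sd inE addbF. Qed.

Lemma sd_tr (T : finType) (A B C : {set T}) : sd (sd A C) (sd B C) = sd A B.
Proof.
apply/setP=> i; rewrite !in_sd.
by case: (i \in A); case: (i \in B); case: (i \in C).
Qed.

Lemma card_sd (T : finType) (A B : {set T}) :
  #|sd A B| + 2 * #|A :&: B| = #|A| + #|B|.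
Proof.
have -> : sd A B = (A :|: B) :\: (A :&: B).
  apply/setP=> i; rewrite !inE; by case: (i \in A); case: (i \in B).
have hs : A :&: B \subset A :|: B.
  by apply/subsetP=> i; rewrite !inE => /andP[->].
rewrite cardsD (setIidPr hs) -cardsUI.
have := subset_leq_card hs; lia.
Qed.

Lemma sd_tri (T : finType) (A B C : {set T}) :
  #|sd A B| <= #|sd A C| + #|sd C B|.
Proof.
apply: leq_trans (leq_card_setU (sd A C) (sd C B)).
apply: subset_leq_card; apply/subsetP=> i; rewrite in_setU !in_sd.
by case: (i \in A); case: (i \in B); case: (i \in C).
Qed.

Lemma sum_ind (T : finType) (A : {pred T}) :
  \sum_(t : T) (t \in A : nat) = #|A|.
Proof.
rewrite -sum1_card [RHS]big_mkcond /=; apply: eq_bigr => t _; by case: (t \in A).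
Qed.

Lemma sum_le1 (I : finType) (Z : {pred I}) (P : pred I) :
  (forall i j, i \in Z -> j \in Z -> P i -> P j -> i = j) ->
  \sum_(i in Z) (P i : nat) = [exists i in Z, P i].
Proof.
move=> hu; case: (boolP [exists i in Z, P i]) => [/existsP[i /andP[Zi Pi]]|/existsPn none].
  rewrite (bigD1 i) //= Pi big1 // => j /andP[Zj ji].
  case: (boolP (P j)) => // Pj; by rewrite (hu _ _ Zj Zi Pj Pi) eqxx in ji.
by rewrite big1 // => i Zi; have := none i; rewrite Zi /=; case: (P i).
Qed.

Lemma disj_count (I T : finType) (Z : {set I}) (f : I -> {set T}) :
  (forall i j t, i \in Z -> j \in Z -> t \in f i -> t \in f j -> i = j) ->
  \sum_(i in Z) #|f i| = #|\bigcup_(i in Z) f i|.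
Proof.
move=> hd.
rewrite -sum_ind.
under eq_bigr do rewrite -sum_ind.
rewrite exchange_big /=; apply: eq_bigr => t _.
rewrite sum_le1; last by move=> i j Zi Zj; apply: hd.
congr (nat_of_bool _); apply/existsP/bigcupP.
  by case=> i /andP[Zi ti]; exists i.
by case=> i Zi ti; exists i; rewrite Zi.
Qed.

Lemma card_ball (T : finType) (c : {set T}) k :
  \sum_(x : {set T}) (#|sd x c| == k : nat) = 'C(#|T|, k).
Proof.
have hi : injective (fun x : {set T} => sd x c) by move=> x y /(congr1 (fun z => sd z c)); rewrite !sdK.
rewrite (reindex_inj hi) /=.
rewrite -card_draws -sum_ind; apply: eq_bigr => y _; by rewrite sdK inE.
Qed.

Definition dist5 (T : finType) (Q : {set {set T}}) :=
  forall A B, A \in Q -> B \in Q -> A != B -> 5 <= #|sd A B|.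

Definition near (T : finType) (Q : {set {set T}}) (x : {set T}) :=
  [exists c in Q, #|sd x c| <= 2].

Lemma near_eq (T : finType) (Q : {set {set T}}) x : dist5 Q ->
  (near Q x : nat) = \sum_(c in Q) (#|sd x c| <= 2 : nat).
Proof.
move=> h5; rewrite sum_le1 // => i j Qi Qj hi hj.
apply/eqP; apply: contraT => ij; have := h5 _ _ Qi Qj ij.
have := sd_tri i j x; rewrite (sdC i x); lia.
Qed.

Lemma near_sum (T : finType) (Q : {set {set T}}) : dist5 Q ->
  \sum_(x : {set T}) (near Q x : nat) =
  #|Q| * ('C(#|T|, 0) + 'C(#|T|, 1) + 'C(#|T|, 2)).
Proof.
move=> h5; rewrite (eq_bigr _ (fun x _ => near_eq x h5)) exchange_big /=.
rewrite -sum_nat_const; apply: eq_bigr => c _.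
rewrite -!(card_ball c) -!big_split /=; apply: eq_bigr => x _.
by case: #|sd x c| => [|[|[|]]].
Qed.

Lemma triple_bound (T : finType) (Q : {set {set T}}) x : dist5 Q ->
  3 * \sum_(c in Q) (#|sd x c| == 3 : nat) <= #|T|.
Proof.
move=> h5.
pose Z := [set c in Q | #|sd x c| == 3].
have -> : 3 * \sum_(c in Q) (#|sd x c| == 3 : nat) = \sum_(c in Z) #|sd x c|.
  rewrite big_distrr /= big_mkcond [RHS]big_mkcond /=; apply: eq_bigr => c _.
  rewrite inE; case: (c \in Q) => //=; case: eqP => //= ->; by [].
rewrite disj_count; first exact: max_card.
move=> i j t /setIdP[Qi /eqP hi] /setIdP[Qj /eqP hj] ti tj.
apply/eqP; apply: contraT => ij; have := h5 _ _ Qi Qj ij.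
rewrite -(sd_tr i j x) (sdC i x) (sdC j x).
have := card_sd (sd x i) (sd x j).
have : 0 < #|sd x i :&: sd x j| by apply/card_gt0P; exists t; rewrite in_setI ti tj.
lia.
Qed.

Definition Ds (T : finType) (Q : {set {set T}}) (r s : T) :=
  [set D in Q | [&& #|D| == 5, r \in D & s \in D]].

Definition Q5 (T : finType) (Q : {set {set T}}) := [set D in Q | #|D| == 5].

Definition Qc (T : finType) (Q : {set {set T}}) (c : {set T}) :=
  [set D | sd D c \in Q].

Lemma pair_sub (T : finType) (D : {set T}) r s :
  r \in D -> s \in D -> D :&: [set r; s] = [set r; s].
Proof.
move=> rD sD; apply/setIidPr/subsetP=> i; rewrite !inE => /orP[/eqP->|/eqP->] //.
Qed.

Definition Uset (T : finType) (Q : {set {set T}}) (r s : T) :=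
  \bigcup_(D in Ds Q r s) (D :\: [set r; s]).

Lemma U_card (T : finType) (Q : {set {set T}}) r s : dist5 Q -> r != s ->
  #|Uset Q r s| = 3 * #|Ds Q r s|.
Proof.
move=> h5 rs.
have <- : \sum_(D in Ds Q r s) #|D :\: [set r; s]| = 3 * #|Ds Q r s|.
  rewrite mulnC -sum_nat_const; apply: eq_bigr => D.
  rewrite inE => /and4P[_ /eqP D5 rD sD].
  by rewrite cardsD pair_sub // cards2 rs D5.
rewrite disj_count //.
move=> i j t; rewrite !inE => /and4P[Qi /eqP i5 ri si] /and4P[Qj /eqP j5 rj sj].
move=> /andP[tn ti] /andP[_ tj].
apply/eqP; apply: contraT => ij; have := h5 _ _ Qi Qj ij.
have := card_sd i j; rewrite i5 j5.
have := cardsID [set r; s] (i :&: j).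
have -> : i :&: j :&: [set r; s] = [set r; s] by apply: pair_sub; rewrite in_setI ?ri ?rj ?si ?sj.
rewrite cards2 rs.
have : 0 < #|i :&: j :\: [set r; s]|.
  by apply/card_gt0P; exists t; rewrite in_setD in_setI ti tj andbT; move: tn; rewrite !inE => ->.
lia.
Qed.

Lemma U_sub (T : finType) (Q : {set {set T}}) r s :
  Uset Q r s \subset ~: [set r; s].
Proof.
apply/subsetP=> t /bigcupP[D _]; rewrite !inE; by case/andP=> ->.
Qed.

Lemma Ds_bound (T : finType) (Q : {set {set T}}) r s : dist5 Q -> r != s ->
  3 * #|Ds Q r s| <= #|T| - 2.
Proof.
move=> h5 rs; rewrite -U_card //.
have := subset_leq_card (U_sub Q r s); have := cardsC [set r; s]; rewrite cards2 rs; lia.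
Qed.

Lemma pairs5 (T : finType) (D : {set T}) : #|D| = 5 ->
  \sum_(r : T) \sum_(s : T) ((r != s) && (r \in D) && (s \in D) : nat) = 20.
Proof.
move=> D5.
have -> : \sum_(r : T) \sum_(s : T) ((r != s) && (r \in D) && (s \in D) : nat)
        = \sum_(r : T) (r \in D : nat) * 4.
  apply: eq_bigr => r _.
  case: (boolP (r \in D)) => rD; last by rewrite big1 // => s _; rewrite andbF.
  rewrite mul1n.
  have := cardsD1 r D; rewrite rD D5 => h.
  have -> : 4 = #|D :\ r| by lia.
  rewrite -sum_ind; apply: eq_bigr => s _; rewrite !inE andbT eq_sym.
  by case: (s == r); case: (s \in D).
by rewrite -big_distrl /= sum_ind D5.
Qed.

Lemma A5_count (T : finType) (Q : {set {set T}}) :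
  20 * #|Q5 Q| = \sum_(r : T) \sum_(s : T) (r != s) * #|Ds Q r s|.
Proof.
have hk r s : #|Ds Q r s| = \sum_(D in Q5 Q) ((r \in D) && (s \in D) : nat).
  rewrite -sum_ind [RHS]big_mkcond; apply: eq_bigr => D _; rewrite !inE.
  by case: (D \in Q); case: (#|D| == 5).
have -> : \sum_(r : T) \sum_(s : T) (r != s) * #|Ds Q r s| =
   \sum_(r : T) \sum_(s : T) \sum_(D in Q5 Q) ((r != s) && (r \in D) && (s \in D) : nat).
  apply: eq_bigr => r _; apply: eq_bigr => s _; rewrite hk big_distrr /=.
  apply: eq_bigr => D _; by case: (r != s); case: (r \in D); case: (s \in D).
under eq_bigr do rewrite exchange_big.
rewrite exchange_big /= mulnC -sum_nat_const; apply: eq_bigr => D.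
by rewrite inE => /andP[_ /eqP D5]; rewrite pairs5.
Qed.

Lemma Qc_set0 (T : finType) (Q : {set {set T}}) (c : {set T}) :
  c \in Q -> set0 \in Qc Q c.
Proof. by move=> Qc0; rewrite inE sdC sd0. Qed.

Lemma Qc_dist5 (T : finType) (Q : {set {set T}}) (c : {set T}) :
  dist5 Q -> dist5 (Qc Q c).
Proof.
move=> h5 A B; rewrite !inE => QA QB AB.
rewrite -(sd_tr A B c); apply: h5 => //.
by apply: contra AB => /eqP /(congr1 (fun z => sd z c)); rewrite !sdK => ->.
Qed.

Lemma Qc0 (T : finType) (Q : {set {set T}}) : Qc Q set0 = Q.
Proof. by apply/setP=> D; rewrite inE sd0. Qed.

Lemma cov_bound (T : finType) (Q : {set {set T}}) (c : {set T}) :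
  dist5 Q -> c \in Q ->
  \sum_(x : {set T}) ((#|sd x c| == 3) && near Q x : nat) <= 10 * #|Q5 (Qc Q c)|.
Proof.
move=> h5 Qc'.
apply: (@leq_trans (\sum_(x : {set T}) \sum_(D in Q5 (Qc Q c))
          ((sd x c \subset D) && (#|sd x c| == 3) : nat))).
  apply: leq_sum => x _.
  case: (boolP (#|sd x c| == 3)) => //= /eqP h3.
  case: (boolP (near Q x)) => //= /existsP[c1 /andP[Qc1 h2]].
  have c1c : c1 != c by apply: contraTneq h2 => ->; rewrite h3.
  pose D := sd c1 c.
  have D5 : #|D| = 5.
    rewrite /D; have := h5 _ _ Qc1 Qc' c1c; have := sd_tri c1 c x; rewrite (sdC c1 x); lia.
  have DQ : D \in Q5 (Qc Q c) by rewrite !inE sdK Qc1 D5 eqxx.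
  have yD : sd x c \subset D.
    apply/setIidPl/eqP; rewrite eqEcard subsetIl /=.
    have := card_sd (sd x c) D; rewrite /D sd_tr D5 h3; lia.
  by rewrite (bigD1 D) //= yD.
rewrite exchange_big /= mulnC -sum_nat_const leq_eqVlt; apply/orP; left; apply/eqP.
apply: eq_bigr => D; rewrite inE => /andP[_ /eqP D5].
have hi : injective (fun x : {set T} => sd x c) by move=> x y /(congr1 (fun z => sd z c)); rewrite !sdK.
rewrite (reindex_inj hi) /=.
rewrite -[10]/('C(5, 3)) -D5 -cards_draws -sum_ind; apply: eq_bigr => y _.
by rewrite sdK inE.
Qed.

Lemma sum_const_T (T : finType) K : \sum_(i : T) K = #|T| * K.
Proof. by rewrite -sum_nat_const; apply: eq_bigl => i. Qed.

Lemma sum_lt (I : finType) (P : pred I) (F G : I -> nat) i0 :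
  (forall i, P i -> F i <= G i) -> P i0 -> F i0 < G i0 ->
  \sum_(i | P i) F i < \sum_(i | P i) G i.
Proof.
move=> hle Pi0 hlt.
rewrite (bigD1 i0) //= [X in _ < X](bigD1 i0) //=.
have : \sum_(i | P i && (i != i0)) F i <= \sum_(i | P i && (i != i0)) G i.
  by apply: leq_sum => i /andP[Pi _]; apply: hle.
lia.
Qed.

Lemma sum_neq (T : finType) (r : T) : \sum_(s : T) (r != s : nat) = #|T|.-1.
Proof.
rewrite -(cardC1 r) -sum_ind; apply: eq_bigr => s _; by rewrite !inE eq_sym.
Qed.

Lemma card_sets (T : finType) : #|{set T}| = 2 ^ #|T|.
Proof. have := card_powerset [set: T]; rewrite powersetT !cardsT => <- //. Qed.

Lemma main_count (T : finType) (Q : {set {set T}}) (q : nat) :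
  set0 \in Q -> dist5 Q -> #|T| = 3 * q ->
  2 * 2 ^ #|T| = #|Q| * (#|T|.+1) ^ 2 ->
  forall r s, r != s -> 3 * #|Ds Q r s| = #|T| - 3.
Proof.
move=> Q0 h5 hq hM r0 s0 rs0.
have hb := Ds_bound h5 rs0.
apply/eqP; apply: contraT => hne.
have hlt : 3 * #|Ds Q r0 s0| < #|T| - 3 by lia.
have hF1 c r s : c \in Q -> r != s -> 3 * #|Ds (Qc Q c) r s| <= #|T| - 3.
  move=> Qc' rs; have := Ds_bound (@Qc_dist5 _ Q c h5) rs; lia.
have hG r : \sum_(s : T) (r != s) * (#|T| - 3) = #|T|.-1 * (#|T| - 3).
  by rewrite -big_distrl /= sum_neq.
have hW c : c \in Q -> 60 * #|Q5 (Qc Q c)| <=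
            \sum_(r : T) \sum_(s : T) (r != s) * (#|T| - 3).
  move=> Qc'; rewrite -[60]/(3 * 20) -mulnA A5_count big_distrr /=.
  apply: leq_sum => r _; rewrite big_distrr /=; apply: leq_sum => s _.
  rewrite mulnCA; case: (boolP (r != s)) => rs; last by rewrite !mul0n.
  by rewrite !mul1n hF1.
have hW0 : 60 * #|Q5 (Qc Q set0)| <
            \sum_(r : T) \sum_(s : T) (r != s) * (#|T| - 3).
  rewrite -[60]/(3 * 20) -mulnA A5_count big_distrr /=.
  apply: (@sum_lt _ xpredT _ _ r0) => // [r _|].
    rewrite big_distrr /=; apply: leq_sum => s _.
    rewrite mulnCA; case: (boolP (r != s)) => rs; last by rewrite !mul0n.
    by rewrite !mul1n hF1.
  rewrite big_distrr /=; apply: (@sum_lt _ xpredT _ _ s0) => // [s _|].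
    rewrite mulnCA; case: (boolP (r0 != s)) => rs; last by rewrite !mul0n.
    by rewrite !mul1n hF1.
  by rewrite mulnCA rs0 !mul1n Qc0.
set M := #|Q|.
have hNn := near_sum h5.
have hNtot : \sum_(x : {set T}) (near Q x : nat) + \sum_(x : {set T}) (~~ near Q x : nat)
             = 2 ^ #|T|.
  by rewrite -big_split /= -card_sets -[RHS]muln1 -sum_const_T; apply: eq_bigr => x _; case: (near Q x).
have hS c : \sum_(x : {set T}) ((#|sd x c| == 3) && ~~ near Q x : nat) +
            \sum_(x : {set T}) ((#|sd x c| == 3) && near Q x : nat) = 'C(#|T|, 3).
  rewrite -(card_ball c) -big_split /=; apply: eq_bigr => x _.
  by case: (#|sd x c| == 3); case: (near Q x).
have hS1 : 3 * \sum_(c in Q) \sum_(x : {set T}) ((#|sd x c| == 3) && ~~ near Q x : nat)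
           <= #|T| * \sum_(x : {set T}) (~~ near Q x : nat).
  rewrite exchange_big /= !big_distrr /=; apply: leq_sum => x _.
  case: (boolP (near Q x)) => nx /=.
    by rewrite big1 // => c _; rewrite andbF.
  have := triple_bound x h5.
  rewrite muln1 => h; apply: leq_trans h; rewrite leq_mul2l; apply/orP; right.
  by apply: leq_sum => c _; case: (_ == 3).
have hS2 : 6 * \sum_(c in Q) \sum_(x : {set T}) ((#|sd x c| == 3) && near Q x : nat)
           < \sum_(c in Q) \sum_(r : T) \sum_(s : T) (r != s) * (#|T| - 3).
  rewrite big_distrr /=.
  apply: (@leq_trans (\sum_(c in Q) (60 * #|Q5 (Qc Q c)|)).+1).
    rewrite ltnS; apply: leq_sum => c Qc'; have := cov_bound h5 Qc'.
    by move=> h; rewrite -[60]/(6 * 10) -mulnA leq_mul2l h orbT.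
  apply: (@sum_lt _ (mem Q) _ _ set0) => // c Qc'; exact: hW.
have hS12 : \sum_(c in Q) \sum_(x : {set T}) ((#|sd x c| == 3) && ~~ near Q x : nat) +
            \sum_(c in Q) \sum_(x : {set T}) ((#|sd x c| == 3) && near Q x : nat)
            = M * 'C(#|T|, 3).
  by rewrite -big_split /= -sum_nat_const; apply: eq_bigr => c _; rewrite hS.
have hTot : \sum_(r : T) \sum_(s : T) (r != s) * (#|T| - 3) = #|T| * (#|T|.-1 * (#|T| - 3)).
  by rewrite (eq_bigr _ (fun r _ => hG r)) sum_const_T.
rewrite hTot sum_nat_const in hS2.
have hn2 : 2 <= #|T| by have := max_card [set r0; s0]; rewrite cards2 rs0.
have hC2 : 'C(#|T|, 2) * 2 = #|T| * #|T|.-1.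
  by rewrite -[2 in LHS]/(2`!) bin_ffact !ffactnS ffactn0 muln1.
have hC3 : 'C(#|T|, 3) * 6 = #|T| * (#|T|.-1 * #|T|.-2).
  by rewrite -[6]/(3`!) bin_ffact !ffactnS ffactn0 muln1.
rewrite bin0 bin1 in hNn.
have [p hp] : exists p, #|T| = p.+3 by exists (#|T| - 3); lia.
move: hNn hNtot hS1 hS12 hS2 hM hC2 hC3; rewrite /M hp /=.
move: ('C(p.+3, 2)) ('C(p.+3, 3)) (\sum_x (near Q x : nat)) (\sum_x (~~ near Q x : nat)).
move=> C2 C3 Nn Nf.
move: (\sum_(c in Q) \sum_x ((#|sd x c| == 3) && ~~ near Q x : nat)).
move: (\sum_(c in Q) \sum_x ((#|sd x c| == 3) && near Q x : nat)).
move: #|Q| (2 ^ p.+3) => m X b a.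
rewrite subSS subSS subSS subn0.
move=> h1 h2 h3 h4 h5' h6 h7 h8.
have hNf : 2 * Nf = m * p.+2 by nia.
nia.
Qed.

Lemma two_m_le m : 2 * m <= 2 ^ m.
Proof.
elim: m => // m IH; rewrite expnS.
have : 1 <= 2 ^ m by rewrite expn_gt0.
lia.
Qed.

Lemma mod3 m n : ~~ odd m -> 2 ^ m = n.+1 -> n = 3 * (n %/ 3).
Proof.
move=> hm hn.
move: (odd_double_half m); rewrite (negbTE hm) /= -muln2 => hm2.
have h4 : n.+1 = 4 ^ m./2 by rewrite -hn -{1}hm2 mulnC expnM.
have : n.+1 %% 3 = 1.
  by rewrite h4 -modnXm (_ : 4 %% 3 = 1) // exp1n.
move=> h.
have : 3 %| n.+1 - 1 by rewrite -eqn_mod_dvd // h.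
rewrite subn1 /= => /divnK; lia.
Qed.

Lemma punct_dist n (j : 'I_n.+1) (u v : bvec n.+1) :
  hdist u v <= (hdist (puncture j u) (puncture j v)).+1.
Proof.
rewrite /hdist.
set S := [set i | puncture j u i != puncture j v i].
have hs : [set i | u i != v i] \subset j |: [set lift j i | i in S].
  apply/subsetP=> i; rewrite !inE.
  case: (unliftP j i) => [k -> | ->] hi; last by rewrite eqxx.
  apply/orP; right; apply/imsetP; exists k => //; by rewrite inE !ffunE.
apply: leq_trans (subset_leq_card hs) _.
rewrite cardsU1; apply: (@leq_trans (1 + #|S|)); last by rewrite add1n.
apply: leq_add; first by case: (_ \notin _).
exact: leq_imset_card.
Qed.

Lemma supp_inj n : injective (@supp n).
Proof.
move=> x y e; apply/ffunP => i.
have := congr1 (fun A : {set 'I_n} => i \in A) e; rewrite /supp !inE.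
by case: (x i); case: (y i).
Qed.

Lemma hdist_sd n (x y : bvec n) : hdist x y = #|sd (supp x) (supp y)|.
Proof.
rewrite /hdist; apply: eq_card => i; rewrite in_sd !inE.
by case: (x i); case: (y i).
Qed.

Lemma wt_supp n (x : bvec n) : wt x = #|supp x|.
Proof.
rewrite /wt /hdist; apply: eq_card => i; rewrite !inE ffunE.
by case: (x i).
Qed.

Lemma supp0 n : supp (zerov n) = set0.
Proof. by apply/setP=> i; rewrite !inE ffunE. Qed.

Unset Implicit Arguments.

Theorem corollary1 (n : nat) (P : {set bvec n}) :
  punctured_preparata P -> reduced P ->
  forall r s : 'I_n, r != s ->
  exists! t : 'I_n,
    forall c : bvec n, c \in P -> wt c = 5 -> c r -> c s -> ~~ c t.
Proof.
move=> [C [j [[m [hm hm4 hN [hmd _] hcard]] hP]]] hred r s rs.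
pose Q := [set supp x | x in P].
have hPd : forall x y, x \in P -> y \in P -> x != y -> 5 <= hdist x y.
  move=> x y; rewrite hP => /imsetP[u Cu ->] /imsetP[v Cv ->] xy.
  have uv : u != v by apply: contra xy => /eqP ->.
  have := hmd _ _ Cu Cv uv; have := punct_dist j u v; lia.
have hQd : dist5 Q.
  move=> A B /imsetP[x Px ->] /imsetP[y Py ->] AB.
  rewrite -hdist_sd; apply: hPd => //; by apply: contra AB => /eqP ->.
have hQ0 : set0 \in Q by rewrite -(supp0 n); apply: imset_f.
have hPC : #|P| = #|C|.
  rewrite hP card_in_imset // => u v Cu Cv e.
  apply/eqP; apply: contraT => uv.
  have := hmd _ _ Cu Cv uv; have := punct_dist j u v; rewrite e.
  rewrite /hdist; have -> : [set i | puncture j v i != puncture j v i] = set0.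
    by apply/setP=> i; rewrite !inE eqxx.
  by rewrite cards0; lia.
have hQP : #|Q| = #|P| by rewrite card_imset //; apply: supp_inj.
have h2m := two_m_le m.
have hM : 2 * 2 ^ #|'I_n| = #|Q| * (#|'I_n|.+1) ^ 2.
  rewrite card_ord hQP hPC hcard -expnB // -hN -expnS hN.
  by rewrite -expnM mulnC -expnD (mulnC m 2) subnKC.
have h3 := mod3 hm (esym hN).
have hmain := main_count hQ0 hQd (etrans (card_ord n) h3) hM rs.
rewrite card_ord in hmain.
have hn16 : 16 <= n.+1.
  by rewrite hN; apply: (@leq_trans (2 ^ 4)) => //; apply: leq_pexp2l.
have hU := U_card hQd rs.
pose R := ~: (Uset Q r s :|: [set r; s]).
have hR : #|R| == 1.
  have hdisj : Uset Q r s :&: [set r; s] = set0.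
    apply/setP=> i; rewrite !inE; apply/negbTE; apply/negP => /andP[iU ir].
    by have := subsetP (U_sub Q r s) i iU; rewrite !inE ir.
  have := cardsUI (Uset Q r s) [set r; s]; rewrite hdisj cards0 cards2 rs.
  have := cardsC (Uset Q r s :|: [set r; s]); rewrite card_ord.
  rewrite /R; lia.
case/cards1P: hR => t Rt.
have hDs : forall D, D \in Ds Q r s ->
    exists c, [/\ c \in P, wt c = 5, c r, c s & supp c = D].
  move=> D; rewrite inE => /and4P[/imsetP[c Pc ->] /eqP c5 rc sc].
  by exists c; rewrite wt_supp c5; move: rc sc; rewrite !inE.
have hne : exists D, D \in Ds Q r s.
  have : 0 < #|Ds Q r s| by lia.
  by case/card_gt0P=> D; exists D.
exists t; split.
  move=> c Pc c5 cr cs; apply/negP => ct.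
  have tR : t \in R by rewrite Rt inE.
  have cD : supp c \in Ds Q r s.
    by rewrite !inE imset_f //= -wt_supp c5 eqxx cr cs.
  move: tR; rewrite !inE negb_or => /andP[/negP tU _]; apply: tU.
  apply/bigcupP; exists (supp c) => //.
  have : t \notin [set r; s].
    by move: (Rt); move/setP/(_ t); rewrite !inE eqxx negb_or => /andP[_ ->].
  by rewrite in_setD => ->; rewrite inE.
move=> t' ht'.
have : t' \in R; last by rewrite Rt inE => /eqP.
rewrite !inE negb_or; apply/andP; split.
  apply/negP => /bigcupP[D DD]; rewrite inE => /andP[_ tD].
  have [c [Pc c5 cr cs sD]] := hDs D DD.
  have := ht' c Pc c5 cr cs; by rewrite -sD inE in tD; rewrite tD.
case: hne => D DD; have [c [Pc c5 cr cs sD]] := hDs D DD.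
have := ht' c Pc c5 cr cs.
apply: contraL => /orP[] /eqP ->; by rewrite ?cr ?cs.
Qed.
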